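(* Let $G$ be a vertex-weighted complex digraph (as defined in the context). Then the underlying undirected graph of $G$ is connected if and only if the algebraic multiplicity of the eigenvalue $0$ of the combinatorial Laplacian $L(G)$ is exactly $1$.
   Context: A vertex-weighted complex digraph is $G=(V,E)$ with $V=\{1,\dots,n\}$, $E\subseteq\{(i,j)\in V\times V:i\neq j\}$ such that for $i\neq j$ at most one of $(i,j),(j,i)$ lies in $E$, together with nonzero complex vertex weights $w_1,\dots,w_n\in\mathbb C\setminus\{0\}$; for each $i$ fix a square root $s_i$ with $s_i^2=w_i$. Vertices $i\neq j$ are adjacent iff $(i,j)\in E$ or $(j,i)\in E$. The adjacency matrix $A(G)$ has $A_{ij}=\overline{s_i}\,s_j$ if $i,j$ are adjacent and $A_{ij}=0$ otherwise. The degree of vertex $i$ is $d_i=\sum_{j \text{ adjacent to } i}|w_j|$, $D(G)=\mathrm{diag}(d_1,\dots,d_n)$, the combinatorial Laplacian is $L(G)=D(G)-A(G)$ and the signless Laplacian is $Q(G)=D(G)+A(G)$; both are Hermitian positive semidefinite. Connectivity, connected components and cycles refer to the underlying undirected graph. *)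

(* Defs.v *)
From HB Require Import structures.
From mathcomp Require Import all_boot all_order all_algebra.
Set Implicit Arguments. Unset Strict Implicit. Unset Printing Implicit Defensive.
Import Order.TTheory GRing.Theory Num.Theory.
Local Open Scope ring_scope.

(* Vertex-weighted complex digraph on vertex set 'I_n (= {1..n} shifted to
   {0..n-1}); E : rel 'I_n is the arc set, w the weights, s the chosen
   square roots. The complex field is modelled by an arbitrary
   numClosedFieldType C (e.g. algC). *)

Definition digraph_ok n (E : rel 'I_n) : Prop :=
  forall i j : 'I_n, E i j -> (i != j) && ~~ E j i.

Definition adj n (E : rel 'I_n) : rel 'I_n := fun i j => (i != j) && (E i j || E j i).

Definition ugraph_connected n (E : rel 'I_n) : Prop :=
  forall i j : 'I_n, connect (adj E) i j.

Definition adjmx (C : numClosedFieldType) n (E : rel 'I_n) (s : 'I_n -> C)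
  : 'M[C]_n :=
  \matrix_(i, j) (if adj E i j then (s i)^* * s j else 0).

Definition degree (C : numClosedFieldType) n (E : rel 'I_n) (w : 'I_n -> C)
  (i : 'I_n) : C :=
  \sum_(j | adj E i j) `|w j|.

Definition degmx (C : numClosedFieldType) n (E : rel 'I_n) (w : 'I_n -> C)
  : 'M[C]_n :=
  diag_mx (\row_i degree E w i).

Definition laplacian (C : numClosedFieldType) n (E : rel 'I_n)
  (w s : 'I_n -> C) : 'M[C]_n :=
  degmx E w - adjmx E s.

Definition alg_mult (C : numClosedFieldType) n (M : 'M[C]_n) (a : C) : nat :=
  mup a (char_poly M).

(* Main.v *)
Require Import Defs.
From HB Require Import structures.
From mathcomp Require Import all_boot all_order all_algebra.
From mathcomp Require Import ring.
Import Order.TTheory GRing.Theory Num.Theory.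
Local Open Scope ring_scope.
Set Implicit Arguments. Unset Strict Implicit. Unset Printing Implicit Defensive.
Section LA.
Variable F : fieldType.

Lemma cp_conj n (P A : 'M[F]_n) : P \in unitmx ->
  char_poly (invmx P *m A *m P) = char_poly A.
Proof.
move=> uP; rewrite /char_poly /char_poly_mx.
have eX : ('X%:M : 'M[{poly F}]_n) =
  map_mx polyC (invmx P) *m 'X%:M *m map_mx polyC P.
  by rewrite scalar_mxC -mulmxA -map_mxM mulVmx // map_mx1 mulmx1.
rewrite {1}eX !map_mxM -mulmxBl -mulmxBr !det_mulmx !det_map_mx.
by rewrite mulrC mulrA -rmorphM -det_mulmx mulmxV // det1 rmorph1 mul1r.
Qed.

Lemma rank_conj n (P A : 'M[F]_n) : P \in unitmx ->
  \rank (invmx P *m A *m P) = \rank A.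
Proof.
move=> uP; rewrite mxrankMfree ?row_free_unit //.
rewrite -mxrank_tr trmx_mul mxrankMfree ?mxrank_tr //.
by rewrite row_free_unit unitmx_tr unitmx_inv.
Qed.

Lemma rank_diag n (d : 'rV[F]_n) :
  \rank (diag_mx d) = (\sum_(i < n) (d ord0 i != 0%R))%N.
Proof.
elim: n d => [|n IH] d.
  by rewrite big_ord0; apply/eqP; rewrite -leqn0 rank_leq_row.
have -> : diag_mx d = block_mx (diag_mx (lsubmx (d : 'rV_(1 + n)))) 0 0
    (diag_mx (rsubmx (d : 'rV_(1 + n)))) :> 'M_(1 + n).
  by rewrite -diag_mx_row hsubmxK.
rewrite (@rank_diag_block_mx F 1 1 n n) IH big_ord_recl rank_rV.
congr (_ + _)%N.
  have -> : (diag_mx (lsubmx (d : 'rV_(1 + n))) == 0) = (d 0 ord0 == 0).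
    apply/eqP/eqP => [/matrixP/(_ 0 0)|].
      by rewrite !mxE /= mulr1n => <-; congr (d _ _); apply: val_inj.
    move=> h; apply/matrixP => i j; rewrite !ord1 !mxE mulr1n.
    by rewrite -h; congr (d _ _); apply: val_inj.
  by [].
apply: eq_bigr => i _; rewrite mxE; congr (d _ _ != 0); exact: val_inj.
Qed.

Lemma mup_diag n (d : 'rV[F]_n) :
  mup 0 (char_poly (diag_mx d)) = (\sum_(i < n) (d ord0 i == 0%R))%N.
Proof.
rewrite char_poly_trig ?diag_mx_is_trig //.
have -> : \prod_(i < n) ('X - (diag_mx d i i)%:P) =
          \prod_(y <- [seq d 0 i | i <- enum 'I_n]) ('X - y%:P).
  rewrite big_map big_enum /=; apply: eq_bigr => i _.
  by rewrite mxE eqxx mulr1n.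
rewrite mu_prod_XsubC count_map -sum1_count big_mkcond /= big_enum_cond /=.
by apply: eq_bigr => i _; rewrite eq_sym; case: (_ == _).
Qed.

Lemma mup_rank_diag n (d : 'rV[F]_n) :
  (mup 0 (char_poly (diag_mx d)) + \rank (diag_mx d))%N = n.
Proof.
rewrite mup_diag rank_diag -big_split /=.
rewrite (eq_bigr (fun _ => 1%N)); first by rewrite sum1_card card_ord.
by move=> i _; case: (_ == _).
Qed.
End LA.

Lemma normal_mup (C : numClosedFieldType) n (L : 'M[C]_n) :
  map_mx Num.conj (L^T) = L -> (mup 0 (char_poly L) + \rank L)%N = n.
Proof.
move=> hL; have : L \is normalmx by apply/normalmxP; rewrite hL.
move=> /orthomx_spectralP ->.
rewrite cp_conj ?rank_conj ?spectral_unit //; exact: mup_rank_diag.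
Qed.

Section Graph.
Variables (C : numClosedFieldType) (n : nat) (E : rel 'I_n) (w s : 'I_n -> C).
Hypothesis hw : forall i, w i != 0.
Hypothesis hs : forall i, s i ^+ 2 = w i.

Lemma adjC i j : adj E i j = adj E j i.
Proof. by rewrite /adj eq_sym orbC. Qed.

Lemma snz i : s i != 0.
Proof. by apply: contra (hw i) => /eqP si0; rewrite -hs si0 expr0n. Qed.

Lemma normw i : `|w i| = s i * (s i)^*.
Proof. by rewrite -hs normrX normCK. Qed.

Lemma herm : map_mx Num.conj (laplacian E w s)^T = laplacian E w s.
Proof.
apply/matrixP => i j; rewrite !mxE rmorphB /=; congr (_ - _).
  rewrite rmorphMn /= /degree rmorph_sum /=.
  case: (eqVneq i j) => [<-|nij]; last by rewrite !mulr0n.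
  by rewrite !mulr1n; apply: eq_bigr => k _; rewrite geC0_conj.
rewrite adjC; case: (adj E i j); last by rewrite rmorph0.
by rewrite rmorphM /= conjCK mulrC.
Qed.

Lemma mulL (x : 'rV[C]_n) j : (x *m laplacian E w s) 0 j =
  \sum_(i | adj E i j) (x 0 j * `|w i| - x 0 i * ((s i)^* * s j)).
Proof.
rewrite /laplacian mulmxBr /degmx mul_mx_diag !mxE sumrB; congr (_ - _).
  rewrite /degree mulr_sumr; apply: eq_bigl => i; exact: adjC.
rewrite [RHS]big_mkcond; apply: eq_bigr => i _; rewrite /adjmx mxE.
by case: (adj E i j); rewrite ?mulr0.
Qed.

Definition sv : 'rV[C]_n := \row_i s i.

Lemma sv_ker : sv *m laplacian E w s = 0.
Proof.
apply/rowP => j; rewrite mulL [RHS]mxE big1 // => i _; rewrite !mxE normw; ring.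
Qed.

Lemma ker_const (a : 'I_n) (x : 'rV[C]_n) : ugraph_connected E ->
  x *m laplacian E w s = 0 -> exists c, x = c *: sv.
Proof.
move=> hc hx.
pose z i := x 0 i / s i.
have xz i : x 0 i = z i * s i by rewrite /z divfK // snz.
have harm j : \sum_(i | adj E i j) `|w i| * (z j - z i) = 0.
  have := congr1 (fun M : 'rV[C]_n => M 0 j) hx; rewrite mulL mxE.
  have -> : \sum_(i | adj E i j) (x 0 j * `|w i| - x 0 i * ((s i)^* * s j)) =
    s j * \sum_(i | adj E i j) `|w i| * (z j - z i).
    rewrite mulr_sumr; apply: eq_bigr => i _; rewrite !xz normw; ring.
  by move/eqP; rewrite mulf_eq0 (negPf (snz j)) /= => /eqP.
pose T i j := if adj E i j then `|w i| * `|w j| * ((z j)^* * (z j - z i)) else 0.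
have S0 : \sum_j \sum_i T i j = 0.
  rewrite big1 // => j _.
  have -> : \sum_i T i j = (`|w j| * (z j)^*) * \sum_(i | adj E i j) `|w i| * (z j - z i).
    rewrite mulr_sumr [RHS]big_mkcond; apply: eq_bigr => i _; rewrite /T.
    by case: (adj E i j) => //; ring.
  by rewrite harm mulr0.
pose U i j := if adj E i j then `|w i| * `|w j| * ((z j - z i) * (z j - z i)^*) else 0.
have SU : \sum_j \sum_i U i j = 0.
  have <- : \sum_j \sum_i T i j + \sum_j \sum_i T i j = \sum_j \sum_i U i j.
    rewrite {2}(exchange_big) -big_split; apply: eq_bigr => j _.
    rewrite -big_split; apply: eq_bigr => i _; rewrite /T /U (adjC j i) /=.
    case: (adj E i j); last by rewrite addr0.
    rewrite rmorphB /=; ring.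
  by rewrite S0 addr0.
have Uge0 i j : 0 <= U i j.
  rewrite /U; case: (adj E i j) => //.
  by rewrite mulr_ge0 ?mul_conjC_ge0 // mulr_ge0.
have U0 i j : U i j = 0.
  have h := psumr_eq0P (P := xpredT) (fun j _ => sumr_ge0 _ (fun i _ => Uge0 i j)) SU.
  exact: (psumr_eq0P (P := xpredT) (fun i _ => Uge0 i j) (h j isT)).
have zadj i j : adj E i j -> z i = z j.
  move=> aij; have := U0 i j; rewrite /U aij => /eqP.
  rewrite !mulf_eq0 !normr_eq0 (negPf (hw i)) (negPf (hw j)) /=.
  by rewrite conjC_eq0 orbb subr_eq0 => /eqP ->.
exists (z a); apply/rowP => j; rewrite !mxE xz.
have cl : closed (adj E) [pred k | z k == z a].
  by move=> u v /zadj; rewrite !inE /= => ->.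
have := closed_connect cl (hc a j); rewrite !inE eqxx => /esym/eqP ->.
by [].
Qed.
End Graph.

Theorem theorem2p6 (C : numClosedFieldType) (n : nat) (hn : (0 < n)%N)
  (E : rel 'I_n) (w s : 'I_n -> C)
  (hE : digraph_ok E)
  (hw : forall i, w i != 0)
  (hs : forall i, s i ^+ 2 = w i) :
  ugraph_connected E <-> alg_mult (laplacian E w s) 0 = 1%N.
Proof.
set L := laplacian E w s.
have key : alg_mult L 0 = \rank (kermx L).
  by rewrite mxrank_ker -{2}(normal_mup (@herm _ _ E w s)) addnK.
pose a0 : 'I_n := Ordinal hn.
have svK : (sv s <= kermx L)%MS by apply/sub_kermxP; exact: sv_ker.
have svnz : sv s != 0.
  apply/eqP => /rowP/(_ a0); rewrite !mxE; exact/eqP/(snz hw hs).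
have rsv : \rank (sv s) = 1%N by rewrite rank_rV svnz.
rewrite key; split.
  move=> hc; apply/eqP; rewrite eqn_leq; apply/andP; split; last first.
    by rewrite -rsv mxrankS.
  rewrite -rsv; apply: mxrankS; apply/row_subP => i.
  have /sub_kermxP hr : (row i (kermx L) <= kermx L)%MS by exact: row_sub.
  have [c ->] := ker_const hw hs a0 hc hr.
  by rewrite scalemx_sub.
move=> hK.
case: (boolP [forall i, [forall j, connect (adj E) i j]]).
  by move/forallP => H i j; exact: (forallP (H i) j).
move/forallPn => [a /forallPn [b nab]]; exfalso.
pose xa : 'rV[C]_n := \row_i (if connect (adj E) a i then s i else 0).
have xaK : (xa <= kermx L)%MS.
  apply/sub_kermxP; apply/rowP => j; rewrite mulL [RHS]mxE big1 // => i aij; rewrite !mxE.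
  have -> : connect (adj E) a i = connect (adj E) a j.
    apply/idP/idP => h; apply: (connect_trans h); apply: connect1 => //.
    by rewrite adjC.
  case: (connect (adj E) a j); last by rewrite !mul0r subrr.
  by rewrite (normw hs); ring.
have Ksv : (kermx L <= sv s)%MS.
  by have := (mxrank_leqif_sup svK).2; rewrite hK rsv eqxx => <-.
have /sub_rVP [c hc] := submx_trans xaK Ksv.
have ha := congr1 (fun M : 'rV[C]_n => M 0 a) hc.
have hb := congr1 (fun M : 'rV[C]_n => M 0 b) hc.
move: ha hb; rewrite !mxE connect0 (negPf nab) => ha hb.
have c1 : c = 1.
  have : (c - 1) * s a = 0 by rewrite mulrBl mul1r -ha subrr.
  move/eqP; rewrite mulf_eq0 (negPf (snz hw hs a)) orbF subr_eq0.
  by move/eqP.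
by move: hb; rewrite c1 mul1r => /esym/eqP; rewrite (negPf (snz hw hs b)).
Qed.
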